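(* Let $3\le k\le n-1$ and let $T$ be a tree attaining the maximum value of $M_2$ over $\mathcal{CT}_{n,k}$. If $T$ contains a pendent vertex adjacent to a vertex of degree $4$, then $T$ contains no vertex of degree $3$ adjacent to a vertex of degree $2$.
   Context: A chemical tree is a tree with maximum degree at most $4$. A pendent vertex has degree $1$. A segment of a tree is a path of positive length neither of whose end vertices has degree $2$ and all of whose internal vertices have degree $2$. $\mathcal{CT}_{n,k}$ is the class of all $n$-vertex chemical trees with exactly $k$ segments. $M_2(G)=\sum_{uv\in E(G)}d_ud_v$, where $d_v$ is the degree of $v$. *)

(* Defs.v *)
From mathcomp Require Import all_boot.
Set Implicit Arguments. Unset Strict Implicit. Unset Printing Implicit Defensive.

Section Graphs.
Variable n : nat.
Implicit Types (e : rel 'I_n).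

Definition simple_graph e := symmetric e /\ irreflexive e.

Definition deg e (v : 'I_n) : nat := #|[pred w | e v w]|.

Definition acyclic e :=
  forall p : seq 'I_n, 3 <= size p -> uniq p -> ~~ cycle e p.

Definition is_tree e :=
  simple_graph e /\ (forall u v, connect e u v) /\ acyclic e.

Definition chemical e := forall v, deg e v <= 4.

Definition M2 e : nat :=
  \sum_(u : 'I_n) \sum_(v : 'I_n | (u < v) && e u v) deg e u * deg e v.

Definition is_dsegment e (p : seq 'I_n) : Prop :=
  match p with
  | [::] => False
  | x :: q => [&& 1 <= size q, uniq p, path e x q,
                  deg e x != 2, deg e (last x q) != 2 &
                  all (fun v => deg e v == 2) (behead (belast x q))]
  end.

(* exactly k segments: every segment (an undirected path) corresponds to
   exactly two directed vertex sequences, so there are 2k of these *)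
Definition num_segments e (k : nat) : Prop :=
  exists s : seq (seq 'I_n),
    [/\ uniq s, (forall p, p \in s <-> is_dsegment e p) & size s = 2 * k].

Definition CT e (k : nat) : Prop := [/\ is_tree e, chemical e & num_segments e k].

End Graphs.

(* Main.v *)
Require Import Defs.
From mathcomp Require Import all_boot zify.
Set Implicit Arguments. Unset Strict Implicit. Unset Printing Implicit Defensive.

Definition E2 (T : eqType) (s t u v : T) : bool :=
  ((u == s) && (v == t)) || ((u == t) && (v == s)).

Lemma E2C (T : eqType) (s t u v : T) : E2 s t u v = E2 t s u v.
Proof. by rewrite /E2 orbC. Qed.

Lemma E2sym (T : eqType) (s t u v : T) : E2 s t u v = E2 s t v u.
Proof. by rewrite /E2 [X in _ = X]orbC !(andbC (v == _)). Qed.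

Lemma deg2_uniq n (r : rel 'I_n) y p0 v1 v2 :
  deg r y = 2 -> r y p0 -> r y v1 -> r y v2 -> v1 != p0 -> v2 != p0 -> v1 = v2.
Proof.
move=> Hd H0 H1 H2 N1 N2; case: (eqVneq v1 v2) => // N12; exfalso.
have : #|[:: p0; v1; v2]| <= deg r y.
  apply: subset_leq_card; apply/subsetP => z; rewrite !inE.
  by case/or3P => /eqP ->.
by rewrite Hd (card_uniqP _) //= !inE negb_or eq_sym N1 eq_sym N2 N12.
Qed.

Lemma leaf_uniq n (r : rel 'I_n) b a v :
  deg r b = 1 -> r b a -> r b v -> v = a.
Proof.
move=> Hd H0 H1; case: (eqVneq v a) => // N; exfalso.
have : #|[:: a; v]| <= deg r b.
  apply: subset_leq_card; apply/subsetP => z; rewrite !inE.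
  by case/orP => /eqP ->.
by rewrite Hd (card_uniqP _) //= !inE eq_sym N.
Qed.

Lemma deg2_other n (r : rel 'I_n) y p0 :
  deg r y = 2 -> r y p0 -> exists v, r y v /\ v != p0.
Proof.
move=> Hd H0; have : 0 < #|[predD1 [pred w | r y w] & p0]|.
  by move: Hd; rewrite /deg (cardD1 p0) inE H0 add1n => [[]] ->.
by case/card_gt0P => v; rewrite !inE => /andP [] ? ?; exists v.
Qed.

Lemma conn_fwd (T : finType) (r : rel T) (P : T -> Prop) x y :
  (forall u v, r u v -> P u -> P v) -> connect r x y -> P x -> P y.
Proof.
move=> H /connectP [p Hp ->]; elim: p x Hp => //= z p IH x /andP [Hxz Hp] Px.
exact: IH Hp (H _ _ Hxz Px).
Qed.

Lemma conn_isolated (T : finType) (r : rel T) x b :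
  (forall u, ~~ r u b) -> connect r x b -> x = b.
Proof.
move=> H /connectP [p]; case/lastP: p => [|p z] //=.
by rewrite rcons_path last_rcons => /andP [_ Hz] E; move: Hz; rewrite -E (negbTE (H _)).
Qed.

Definition rdel (T : eqType) (r : rel T) (x y : T) : rel T :=
  fun u v => r u v && ~~ E2 x y u v.

Lemma acyc_edge n (r : rel 'I_n) x y :
  simple_graph r -> acyclic r -> r x y -> ~~ connect (rdel r x y) x y.
Proof.
move=> [Hs Hi] Ha Hxy; apply/negP => /connectP [p Hp Hl].
move: Hl; case: (shortenP Hp) => p' Hp' Hu _ Hl'.
case: p' Hp' Hu Hl' => [|z [|z' p'']].
- by move=> _ _ /= E; move: Hxy; rewrite E Hi.
- by rewrite /= /rdel /E2 andbT => /andP [_ ] ; move=> H _ E; move: H; rewrite E !eqxx.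
move=> Hp' Hu Hl'.
have Hc : cycle r [:: x, z, z' & p''].
  rewrite /= rcons_path.
  have /= := sub_path (fun u v (H : rdel r x y u v) => proj1 (andP H)) Hp'.
  move=> /andP [-> /andP [-> ->]] /=.
  have -> : last z' p'' = y by rewrite Hl'.
  by rewrite Hs.
have H3 : 3 <= size [:: x, z, z' & p''] by [].
by move: (Ha _ H3 Hu); rewrite Hc.
Qed.

Fixpoint tailok n (r : rel 'I_n) (y : 'I_n) (z : seq 'I_n) : bool :=
  match z with
  | [::] => deg r y != 2
  | v :: z' => (deg r y == 2) && tailok r v z'
  end.

Lemma tailokE n (r : rel 'I_n) y z :
  tailok r y z = all (fun v => deg r v == 2) (belast y z) && (deg r (last y z) != 2).
Proof. by elim: z y => //= v z IH y; rewrite IH andbA. Qed.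

Lemma dseg2 n (r : rel 'I_n) x y z :
  is_dsegment r [:: x, y & z] =
  [&& uniq [:: x, y & z], r x y, path r y z, deg r x != 2 & tailok r y z].
Proof.
rewrite /is_dsegment tailokE /=.
by case: (_ \notin _); case: (_ \notin _); case: (uniq z); case: (r x y);
   case: (path r y z); case: (deg r x != 2); case: (all _ _); case: (deg r _ != 2).
Qed.

Lemma dsegE n (r : rel 'I_n) x mid l :
  is_dsegment r (x :: rcons mid l) =
  [&& uniq (x :: rcons mid l), path r x (rcons mid l), deg r x != 2,
      deg r l != 2 & all (fun v => deg r v == 2) mid].
Proof.
rewrite /is_dsegment size_rcons belast_rcons last_rcons /=.
by case: (_ \notin _); case: (uniq _); case: (path _ _ _); case: (deg r x != 2);
   case: (all _ _); case: (deg r l != 2).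
Qed.

Lemma dseg_rev n (r : rel 'I_n) q :
  symmetric r -> is_dsegment r q -> is_dsegment r (rev q).
Proof.
move=> Hs; case: q => [|x q] //; case/lastP: q => [|mid l]; first by [].
have E : rev (x :: rcons mid l) = l :: rcons (rev mid) x by rewrite rev_cons rev_rcons.
rewrite E !dsegE -E rev_uniq all_rev.
have Hp : path r l (rcons (rev mid) x) = path r x (rcons mid l).
  have := rev_path r x (rcons mid l); rewrite belast_rcons last_rcons rev_cons => ->.
  by apply: eq_path => a b; rewrite Hs.
rewrite Hp.
by case: (uniq _); case: (path _ _ _); case: (deg r x != 2); case: (deg r l != 2); case: (all _ _).
Qed.

Lemma in_belast (T : eqType) (y u v : T) s l1 l2 :
  y :: s = l1 ++ u :: v :: l2 -> u \in belast y s.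
Proof.
elim: l1 y s => [|h l1 IH] y s /=; first by case=> -> ->; rewrite /= inE eqxx.
case=> -> E; case: s E => [|y' s] /=; first by case: l1 {IH}.
by move=> E; rewrite inE (IH _ _ E) orbT.
Qed.

Lemma pos1 n (r : rel 'I_n) q1 u v q2 :
  is_dsegment r (q1 ++ u :: v :: q2) -> deg r u != 2 -> q1 = [::].
Proof.
case: q1 => [|z q1'] //; rewrite cat_cons => H Hu; exfalso.
case Et: (q1' ++ u :: v :: q2) H => [|y s]; first by case: q1' Et.
rewrite dseg2 tailokE => /and5P [_ _ _ _ /andP [Hall _]].
by move: (allP Hall u (in_belast (esym Et))) => /eqP E; move: Hu; rewrite E.
Qed.

Lemma rev_split (T : Type) (q1 q2 : seq T) u v :
  rev (q1 ++ u :: v :: q2) = rev q2 ++ v :: u :: rev q1.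
Proof. by rewrite rev_cat !rev_cons !cat_rcons. Qed.

Lemma pos2 n (r : rel 'I_n) q1 u v q2 :
  symmetric r -> is_dsegment r (q1 ++ u :: v :: q2) -> deg r v != 2 ->
  rev (q1 ++ u :: v :: q2) = v :: u :: rev q1.
Proof.
move=> Hs H Hv; have := dseg_rev Hs H; rewrite rev_split => H'.
by have := pos1 H' Hv; move=> ->.
Qed.

Lemma tail_uniq n (r : rel 'I_n) : symmetric r -> forall z1 z2 p0 y,
  uniq [:: p0, y & z1] -> uniq [:: p0, y & z2] -> r p0 y ->
  path r y z1 -> path r y z2 -> tailok r y z1 -> tailok r y z2 -> z1 = z2.
Proof.
move=> Hs; elim=> [|v1 z1 IH] [|v2 z2] p0 y //=.
- by move=> _ _ _ _ _ /negbTE ->.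
- by move=> _ _ _ _ _ /andP [->].
move=> /andP [U1 /andP [Y1 U1']] /andP [U2 /andP [Y2 U2']] Hp /andP [H1 P1] /andP [H2 P2]
  /andP [/eqP D T1] /andP [_ T2].
have E : v1 = v2.
  have Hyp : r y p0 by rewrite Hs.
  apply: (deg2_uniq D Hyp H1 H2).
  - by apply: contraNneq U1 => ->; rewrite !inE eqxx orbT.
  - by apply: contraNneq U2 => ->; rewrite !inE eqxx orbT.
subst v2; congr (_ :: _); apply: (IH z2 y v1) => //=.
  by rewrite Y1.
by rewrite Y2.
Qed.

Lemma U0 n (r : rel 'I_n) x y z1 z2 :
  symmetric r -> is_dsegment r [:: x, y & z1] -> is_dsegment r [:: x, y & z2] -> z1 = z2.
Proof.
move=> Hs; rewrite !dseg2 => /and5P [U1 R1 P1 _ T1] /and5P [U2 _ P2 _ T2].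
exact: (tail_uniq Hs U1 U2 R1 P1 P2 T1 T2).
Qed.

Lemma Ustep n (r : rel 'I_n) q q1 u v q2 x y z :
  symmetric r -> is_dsegment r q -> q = q1 ++ u :: v :: q2 -> E2 x y u v ->
  deg r x != 2 -> is_dsegment r [:: x, y & z] ->
  q = [:: x, y & z] \/ q = rev [:: x, y & z].
Proof.
move=> Hs Hq Eq; rewrite /E2 => /orP [] /andP [/eqP Eu /eqP Ev] Hx Hseg; subst u v.
- left; rewrite Eq in Hq *; have E1 := pos1 Hq Hx; subst q1.
  by rewrite (U0 Hs Hq Hseg).
- right; rewrite Eq in Hq *; have E1 := pos2 Hs Hq Hx.
  have Hr := dseg_rev Hs Hq; rewrite E1 in Hr.
  by rewrite -(revK (q1 ++ _)) E1 (U0 Hs Hr Hseg).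
Qed.

Lemma path_split (T : eqType) (r g : rel T) x l :
  path r x l -> ~~ path g x l ->
  exists q1 u v q2, [/\ x :: l = q1 ++ u :: v :: q2, r u v & ~~ g u v].
Proof.
elim: l x => [|y l IH] x //= /andP [Hxy Hp].
case Hg: (g x y); rewrite /=.
- move=> /(IH _ Hp) [q1 [u [v [q2 [E H1 H2]]]]].
  by exists (x :: q1), u, v, q2; split => //; rewrite E.
- by move=> _; exists [::], x, y, l; split => //; rewrite Hg.
Qed.

Definition gpath (T : Type) (g : rel T) (q : seq T) : bool :=
  if q is x :: l then path g x l else true.

Lemma path_rev_sym (T : Type) (r : rel T) x mid l :
  symmetric r -> path r l (rcons (rev mid) x) = path r x (rcons mid l).
Proof.
move=> Hs; have := rev_path r x (rcons mid l); rewrite belast_rcons last_rcons rev_cons => ->.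
by apply: eq_path => a b; rewrite Hs.
Qed.

Lemma gpath_rev (T : Type) (g : rel T) q : symmetric g -> gpath g (rev q) = gpath g q.
Proof.
move=> Hs; case: q => [|x l] //; case/lastP: l => [|mid y] //.
by rewrite rev_cons rev_rcons /= path_rev_sym.
Qed.

Lemma touched_char n (R g : rel 'I_n) a b u0 m z :
  symmetric R ->
  (forall u v, R u v -> ~~ g u v -> E2 a b u v || E2 u0 m u v) ->
  is_dsegment R [:: a; b] -> deg R a != 2 ->
  is_dsegment R [:: u0, m & z] -> deg R u0 != 2 ->
  forall q, is_dsegment R q -> ~~ gpath g q ->
  q \in [:: [:: a; b]; [:: b; a]; [:: u0, m & z]; rev [:: u0, m & z]].
Proof.
move=> Hs HR Hab Ha Hs2 Hu0 q Hq Hg.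
case: q Hq Hg => [|x l] // Hq Hg.
have Hp : path R x l by have := Hq; rewrite /is_dsegment => /and4P [].
have [q1 [u [v [q2 [E H1 H2]]]]] := path_split Hp Hg.
case/orP: (HR _ _ H1 H2) => HE.
- by case: (Ustep (z:=[::]) Hs Hq E HE Ha Hab) => ->; rewrite !inE eqxx ?orbT.
- by case: (Ustep Hs Hq E HE Hu0 Hs2) => ->; rewrite !inE eqxx ?orbT.
Qed.

Lemma dseg_transfer n (R1 R2 g : rel 'I_n) q :
  (forall v, deg R1 v = deg R2 v) -> subrel g R2 ->
  is_dsegment R1 q -> gpath g q -> is_dsegment R2 q.
Proof.
move=> Hd Hg; case: q => [|x l] //= /and5P [A1 A2 A3 A4 /andP [A5 A6]] Hp.
have Ea : (fun v => deg R2 v == 2) =1 (fun v => deg R1 v == 2) by move=> v; rewrite Hd.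
rewrite (eq_all Ea) -!Hd A1 A2 A4 A5 A6 andbT /=.
by rewrite andbT; apply: (sub_path Hg).
Qed.

Lemma count4 n (R g : rel 'I_n) (s L : seq (seq 'I_n)) :
  uniq s -> (forall q, q \in s <-> is_dsegment R q) -> uniq L -> size L = 4 ->
  (forall q, q \in L -> is_dsegment R q /\ ~~ gpath g q) ->
  (forall q, is_dsegment R q -> ~~ gpath g q -> q \in L) ->
  count (fun q => ~~ gpath g q) s = 4.
Proof.
move=> Us Hs UL SL HL1 HL2; rewrite -size_filter -SL; apply: perm_size.
apply: uniq_perm => //; first exact: filter_uniq.
move=> q; rewrite mem_filter; apply/andP/idP.
- by case=> H1 /Hs H2; apply: HL2.
- by move=> /HL1 [H1 H2]; split => //; apply/Hs.
Qed.

Lemma seg_swap n (R R' g : rel 'I_n) (s L L' : seq (seq 'I_n)) k :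
  uniq s -> (forall q, q \in s <-> is_dsegment R q) -> size s = 2 * k ->
  (forall v, deg R v = deg R' v) -> subrel g R -> subrel g R' ->
  uniq L -> size L = 4 ->
  (forall q, q \in L -> is_dsegment R q /\ ~~ gpath g q) ->
  (forall q, is_dsegment R q -> ~~ gpath g q -> q \in L) ->
  uniq L' -> size L' = 4 ->
  (forall q, q \in L' -> is_dsegment R' q /\ ~~ gpath g q) ->
  (forall q, is_dsegment R' q -> ~~ gpath g q -> q \in L') ->
  num_segments R' k.
Proof.
move=> Us Hs Ss Hd HgR HgR' UL SL HL1 HL2 UL' SL' HL1' HL2'.
have C4 := count4 Us Hs UL SL HL1 HL2.
exists ([seq q <- s | gpath g q] ++ L'); split.
- rewrite cat_uniq filter_uniq // UL' andbT /=.
  apply/hasPn => q /HL1' [_ Hq]; by rewrite mem_filter negb_and Hq.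
- move=> q; rewrite mem_cat mem_filter; split.
  + case/orP => [/andP [Hg /Hs Hq] | /HL1' [] //].
    by apply: dseg_transfer Hq Hg.
  + move=> Hq; case Hg: (gpath g q).
    * apply/orP; left; rewrite /=; apply/Hs.
      by apply: (dseg_transfer (R1 := R') _ HgR Hq Hg) => v; rewrite Hd.
    * by rewrite HL2' ?Hg ?orbT.
- rewrite size_cat size_filter SL' -Ss -(count_predC (fun q => gpath g q) s).
  by congr (_ + _); rewrite -C4.
Qed.

Lemma path_suffix (T : eqType) (r : rel T) x l p1 y p2 :
  path r x l -> x :: l = p1 ++ y :: p2 -> path r y p2.
Proof.
elim: p1 x l => [|h p1 IH] x l /=; first by move=> H [Ex El]; rewrite -Ex -El.
move=> H [_ E]; case: l H E => [|x' l] /=; first by case: p1 {IH}.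
by move=> /andP [_ H] E; apply: IH H E.
Qed.

Lemma seg_exists n (r : rel 'I_n) u0 m :
  simple_graph r -> acyclic r -> r u0 m -> deg r u0 != 2 ->
  exists z, is_dsegment r [:: u0, m & z].
Proof.
move=> [Hs Hi] Ha Hum Hu0.
suff H : forall N mid cur, n - size mid <= N -> uniq (u0 :: rcons mid cur) ->
    path r u0 (rcons mid cur) -> all (fun v => deg r v == 2) mid ->
    (exists z, rcons mid cur = m :: z) -> exists z, is_dsegment r [:: u0, m & z].
  apply: (H n [::] m) => //=; [by rewrite subn0 | | by rewrite Hum | by exists [::]].
  by rewrite inE andbT; apply: contraTneq Hum => ->; rewrite Hi.
elim=> [|N IH] mid cur HN Hu Hp Hall [z Ez].
- have Hsz : size (u0 :: rcons mid cur) <= n.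
    by rewrite -(card_uniqP Hu); apply: leq_trans (max_card _) _; rewrite card_ord.
  move: Hsz HN; rewrite /= size_rcons; lia.
case Hc: (deg r cur == 2); last first.
  exists z; rewrite -Ez dsegE Hu Hp Hu0 Hall Hc //.
have Hsz : size (u0 :: rcons mid cur) <= n.
  by rewrite -(card_uniqP Hu); apply: leq_trans (max_card _) _; rewrite card_ord.
move: (Hp); rewrite rcons_path => /andP [Hp0 Hprev].
have [v [Hcv Hvp]] := deg2_other (eqP Hc) (etrans (Hs _ _) Hprev).
case Hin: (v \in u0 :: rcons mid cur).
- exfalso.
  have Hvc : v != cur by apply: contraTneq Hcv => ->; rewrite Hi.
  have Hin' : v \in u0 :: mid.
    by move: Hin; rewrite -rcons_cons mem_rcons inE (negbTE Hvc).
  case/splitPr E0: (u0 :: mid) / Hin' => [p1 p2].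
  have E : u0 :: rcons mid cur = p1 ++ v :: rcons p2 cur by rewrite -rcons_cons E0 rcons_cat.
  have Hu' : uniq (v :: rcons p2 cur) by move: Hu; rewrite E cat_uniq => /and3P [].
  have Hp' : path r v (rcons p2 cur) := path_suffix Hp E.
  case: p2 E0 E Hu' Hp' => [|z0 p2] E0 E Hu' Hp'.
    have : last v (u0 :: mid) = v by rewrite E0 cats1 last_rcons.
    by move=> /= H; move: Hvp; rewrite H eqxx.
  have Hcyc : cycle r (v :: rcons (z0 :: p2) cur).
    rewrite /= rcons_path; move: Hp' => /= /andP [-> ->] /=.
    by rewrite last_rcons.
  have H3 : 3 <= size (v :: rcons (z0 :: p2) cur) by rewrite /= size_rcons.
  by move: (Ha _ H3 Hu'); rewrite Hcyc.
- apply: (IH (rcons mid cur) v).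
  + move: HN Hsz; rewrite /= !size_rcons; lia.
  + by rewrite -rcons_cons rcons_uniq Hin Hu.
  + by rewrite rcons_path Hp last_rcons.
  + by rewrite all_rcons Hc Hall.
  + by exists (rcons z v); rewrite Ez.
Qed.

Lemma cycle_bad n (r s : rel 'I_n) p :
  uniq p -> 3 <= size p -> cycle r p -> ~~ cycle s p ->
  exists x y, [/\ r x y, ~~ s x y & connect (rdel r x y) y x].
Proof.
move=> Hu H3 Hc Hns.
have : ~~ all (fun x => s x (next p x)) p.
  apply: contra Hns => /allP H; exact: cycle_from_next.
case/allPn => x Hx Hbad.
have Hr := next_cycle Hc Hx.
case: (rot_to Hx) => i q Hrot.
have Hnx : next p x = next (x :: q) x by rewrite -Hrot next_rot.
have Hc' : cycle r (x :: q) by rewrite -Hrot rot_cycle.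
have Hu' : uniq (x :: q) by rewrite -Hrot rot_uniq.
have Hs' : 3 <= size (x :: q) by rewrite -Hrot size_rot.
clear Hrot; case: q Hnx Hc' Hu' Hs' => [|y [|z0 q3]] // Hnx Hc' Hu' _.
have Ey : next p x = y by rewrite Hnx /= eqxx.
rewrite Ey in Hr Hbad.
exists x, y; split => //.
apply/connectP; exists (z0 :: rcons q3 x); last by rewrite /= last_rcons.
move: Hc' Hu'; rewrite /= => /and3P [_ Hyz Hp] /and3P [Hx' Hy' Hq].
rewrite /rdel Hyz /E2 /=.
have Hxy : x != y by apply: contraNneq Hx' => ->; rewrite inE eqxx.
have Hxz : z0 != x by apply: contraNneq Hx' => ->; rewrite !inE eqxx orbT.
rewrite (negbTE Hxz) eq_sym (negbTE Hxy) /=.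
rewrite andbF /=; apply: (@sub_in_path _ [pred u | u != y] r).
- move=> u v; rewrite !inE => Hu1 Hv1 Huv; rewrite Huv.
  by rewrite (negbTE Hv1) (negbTE Hu1) !andbF.
- rewrite /= all_rcons inE Hxy /=; apply/andP; split.
    by apply: contraNneq Hy' => ->; rewrite inE eqxx.
  by apply/allP => w Hw; rewrite inE; apply: contraNneq Hy' => <-; rewrite inE Hw orbT.
- exact: Hp.
Qed.

Definition sw (T : eqType) (x y z : T) : T :=
  if z == x then y else if z == y then x else z.

Lemma swK (T : eqType) (x y : T) : involutive (sw x y).
Proof.
move=> z; rewrite /sw; case: (eqVneq z x) => [->|Hx].
  by rewrite eqxx; case: (eqVneq y x) => [->|]; rewrite ?eqxx.
case: (eqVneq z y) => [->|Hy]; first by rewrite eqxx.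
by rewrite (negbTE Hx) (negbTE Hy).
Qed.

Lemma card_sw n (P : pred 'I_n) (x y : 'I_n) :
  #|[pred w | P (sw x y w)]| = #|[pred w | P w]|.
Proof.
have Hinj : injective (sw x y) := can_inj (swK x y).
rewrite -(card_image Hinj [pred w | P w]); apply: eq_card => w.
by rewrite inE -{2}(swK x y w) mem_image.
Qed.

Definition swapg n (e : rel 'I_n) (a b c d : 'I_n) : rel 'I_n :=
  fun u v => (e u v && ~~ E2 a b u v && ~~ E2 c d u v) || E2 a d u v || E2 c b u v.

Definition gcore n (e : rel 'I_n) (a b c d : 'I_n) : rel 'I_n :=
  fun u v => e u v && ~~ E2 a b u v && ~~ E2 c d u v.

Lemma bool_id (L A B1 B2 B3 B4 : bool) X :
  (B1 ==> A) -> (B2 ==> A) -> (B3 ==> ~~ A) -> (B4 ==> ~~ A) ->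
  ~~ (B1 && B2) -> ~~ (B3 && B4) ->
  (L && ((A && ~~ B1 && ~~ B2) || B3 || B4)) * X + (L && B1) * X + (L && B2) * X =
  (L && A) * X + (L && B3) * X + (L && B4) * X.
Proof.
by case: L; case: A; case: B1; case: B2; case: B3; case: B4 => //=;
  rewrite ?mul0n ?mul1n ?addn0 ?add0n.
Qed.

Definition SW n (e : rel 'I_n) (a b c d : 'I_n) :=
  [/\ simple_graph e, e a b, e c d, deg e b = 1 & ~~ connect (rdel e c d) d a] /\
  [/\ a != b, a != c, a != d & [/\ b != c, b != d & c != d]].

Lemma SW_nead n (e : rel 'I_n) a b c d : SW e a b c d -> ~~ e a d.
Proof.
case=> [[[Hs Hi] Hab Hcd Hb Hc] [Nab Nac Nad [Nbc Nbd Ncd]]].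
apply: contra Hc => Had; apply: connect1.
by rewrite /rdel Hs Had /E2 /= (eq_sym d c) (negbTE Ncd) eqxx (negbTE Nac).
Qed.

Lemma SW_necb n (e : rel 'I_n) a b c d : SW e a b c d -> ~~ e c b.
Proof.
case=> [[[Hs Hi] Hab Hcd Hb Hc] [Nab Nac Nad [Nbc Nbd Ncd]]].
apply/negP => Hcb; have : e b c by rewrite Hs.
move=> /(leaf_uniq Hb (etrans (Hs _ _) Hab)) E.
by move: Nac; rewrite E eqxx.
Qed.

Lemma swapg_tau n (e : rel 'I_n) a b c d : SW e a b c d -> forall v w,
  swapg e a b c d v w =
  e v (if v == a then sw b d w else if v == c then sw b d w
       else if v == b then sw a c w else if v == d then sw a c w else w).
Proof.
move=> H; have Nad' := SW_nead H; have Ncb' := SW_necb H.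
case: H => [[[Hs Hi] Hab Hcd Hb Hc] [Nab Nac Nad [Nbc Nbd Ncd]]].
have Hba : e b a by rewrite Hs.
have Hdc : e d c by rewrite Hs.
have Nda' : e d a = false by rewrite Hs (negbTE Nad').
have Nbc' : e b c = false by rewrite Hs (negbTE Ncb').
have D := (negbTE Nab, negbTE Nac, negbTE Nad, negbTE Nbc, negbTE Nbd, negbTE Ncd).
have D1 : (b == a) = false by rewrite eq_sym (negbTE Nab).
have D2 : (c == a) = false by rewrite eq_sym (negbTE Nac).
have D3 : (d == a) = false by rewrite eq_sym (negbTE Nad).
have D4 : (c == b) = false by rewrite eq_sym (negbTE Nbc).
have D5 : (d == b) = false by rewrite eq_sym (negbTE Nbd).
have D6 : (d == c) = false by rewrite eq_sym (negbTE Ncd).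
move=> v w; rewrite /swapg /E2 /sw.
have F := (Hab, Hba, Hcd, Hdc, Nda', Nbc', negbTE Nad', negbTE Ncb').
case: (eqVneq v a) => [->|Hva].
  case: (eqVneq w b) => [->|Hwb]; first by rewrite ?eqxx ?D ?D1 ?D2 ?D3 ?D4 ?D5 ?D6 /= ?F ?andbF ?andbT ?orbF ?orbT.
  case: (eqVneq w d) => [->|Hwd]; first by rewrite ?eqxx ?D ?D1 ?D2 ?D3 ?D4 ?D5 ?D6 /= ?F ?andbF ?andbT ?orbF ?orbT.
  by rewrite ?eqxx ?D ?D1 ?D2 ?D3 ?D4 ?D5 ?D6 ?(negbTE Hwb) ?(negbTE Hwd) /= ?andbF ?andbT ?orbF ?orbT.
case: (eqVneq v c) => [->|Hvc].
  case: (eqVneq w b) => [->|Hwb]; first by rewrite ?eqxx ?D ?D1 ?D2 ?D3 ?D4 ?D5 ?D6 /= ?F ?andbF ?andbT ?orbF ?orbT.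
  case: (eqVneq w d) => [->|Hwd]; first by rewrite ?eqxx ?D ?D1 ?D2 ?D3 ?D4 ?D5 ?D6 /= ?F ?andbF ?andbT ?orbF ?orbT.
  by rewrite ?eqxx ?D ?D1 ?D2 ?D3 ?D4 ?D5 ?D6 ?(negbTE Hwb) ?(negbTE Hwd) /= ?andbF ?andbT ?orbF ?orbT.
case: (eqVneq v b) => [->|Hvb].
  case: (eqVneq w a) => [->|Hwa]; first by rewrite ?eqxx ?D ?D1 ?D2 ?D3 ?D4 ?D5 ?D6 /= ?F ?andbF ?andbT ?orbF ?orbT.
  case: (eqVneq w c) => [->|Hwc]; first by rewrite ?eqxx ?D ?D1 ?D2 ?D3 ?D4 ?D5 ?D6 /= ?F ?andbF ?andbT ?orbF ?orbT.
  by rewrite ?eqxx ?D ?D1 ?D2 ?D3 ?D4 ?D5 ?D6 ?(negbTE Hwa) ?(negbTE Hwc) /= ?andbF ?andbT ?orbF ?orbT.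
case: (eqVneq v d) => [->|Hvd].
  case: (eqVneq w a) => [->|Hwa]; first by rewrite ?eqxx ?D ?D1 ?D2 ?D3 ?D4 ?D5 ?D6 /= ?F ?andbF ?andbT ?orbF ?orbT.
  case: (eqVneq w c) => [->|Hwc]; first by rewrite ?eqxx ?D ?D1 ?D2 ?D3 ?D4 ?D5 ?D6 /= ?F ?andbF ?andbT ?orbF ?orbT.
  by rewrite ?eqxx ?D ?D1 ?D2 ?D3 ?D4 ?D5 ?D6 ?(negbTE Hwa) ?(negbTE Hwc) /= ?andbF ?andbT ?orbF ?orbT.
by rewrite ?(negbTE Hva) ?(negbTE Hvb) ?(negbTE Hvc) ?(negbTE Hvd) /= ?andbF ?andbT ?orbF ?orbT.
Qed.

Lemma swapg_deg n (e : rel 'I_n) a b c d : SW e a b c d -> forall v,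
  deg (swapg e a b c d) v = deg e v.
Proof.
move=> H v; have T := swapg_tau H.
case: H => [_ [Nab Nac Nad [Nbc Nbd Ncd]]].
have D1 : (b == a) = false by rewrite eq_sym (negbTE Nab).
have D2 : (c == a) = false by rewrite eq_sym (negbTE Nac).
have D3 : (d == a) = false by rewrite eq_sym (negbTE Nad).
have D4 : (c == b) = false by rewrite eq_sym (negbTE Nbc).
have D5 : (d == b) = false by rewrite eq_sym (negbTE Nbd).
have D6 : (d == c) = false by rewrite eq_sym (negbTE Ncd).
rewrite /deg.
case: (eqVneq v a) => [->|Hva].
  by rewrite -(card_sw (e a) b d); apply: eq_card => w; rewrite !inE T eqxx.
case: (eqVneq v c) => [->|Hvc].
  by rewrite -(card_sw (e c) b d); apply: eq_card => w; rewrite !inE T eqxx D2.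
case: (eqVneq v b) => [->|Hvb].
  by rewrite -(card_sw (e b) a c); apply: eq_card => w; rewrite !inE T eqxx D1 (negbTE Nbc).
case: (eqVneq v d) => [->|Hvd].
  by rewrite -(card_sw (e d) a c); apply: eq_card => w; rewrite !inE T eqxx D3 D5 D6.
by apply: eq_card => w; rewrite !inE T (negbTE Hva) (negbTE Hvb) (negbTE Hvc) (negbTE Hvd).
Qed.

Lemma swapg_simple n (e : rel 'I_n) a b c d : SW e a b c d ->
  simple_graph (swapg e a b c d).
Proof.
case=> [[[Hs Hi] _ _ _ _] [Nab Nac Nad [Nbc Nbd Ncd]]]; split.
  by move=> u v; rewrite /swapg Hs (E2sym a b) (E2sym c d) (E2sym a d) (E2sym c b).
move=> u; rewrite /swapg Hi /= /E2.
have L : forall x y : 'I_n, x != y -> (u == x) && (u == y) = false.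
  by move=> x y Nxy; case: (eqVneq u x) => [->|] //=; apply/negbTE.
have N1 : d != a by rewrite eq_sym.
have N2 : c != b by rewrite eq_sym.
by rewrite (L a d Nad) (L d a N1) (L c b N2) (L b c Nbc).
Qed.

Lemma rdel_sym (T : eqType) (r : rel T) x y : symmetric r -> symmetric (rdel r x y).
Proof. by move=> Hs u v; rewrite /rdel Hs E2sym. Qed.

Lemma gcore_sym n (e : rel 'I_n) a b c d : symmetric e -> symmetric (gcore e a b c d).
Proof. by move=> Hs u v; rewrite /gcore Hs (E2sym a b) (E2sym c d). Qed.

Lemma E2_eq (T : eqType) (s t x y u v : T) : E2 s t x y -> E2 x y u v = E2 s t u v.
Proof. by rewrite /E2 => /orP [] /andP [/eqP -> /eqP ->] //; rewrite orbC. Qed.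

Lemma E2_mem (T : eqType) (s t u v : T) : E2 s t u v -> (v = s \/ v = t).
Proof. by rewrite /E2 => /orP [] /andP [_ /eqP ->]; [right | left]. Qed.

Lemma swapg_connected n (e : rel 'I_n) a b c d : SW e a b c d ->
  (forall u v, connect e u v) -> forall u v, connect (swapg e a b c d) u v.
Proof.
move=> H Hc; have Hdeg := swapg_deg H; have [Hs' _] := swapg_simple H.
case: H => [[[Hs Hi] Hab Hcd Hb Hda] [Nab Nac Nad [Nbc Nbd Ncd]]].
pose f := rdel e c d.
have Hda' : ~~ connect f d a := Hda.
have Hfs : symmetric f := rdel_sym c d Hs.
have CS := sym_connect_sym Hfs.
have F2 : connect f a c \/ connect f a d.
  have : connect e c a := Hc c a.
  move/(conn_fwd (P := fun v => connect f v c \/ connect f v d)); apply; last by left.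
  move=> x y Hxy Px; case Hf: (f x y).
  - have Hyx : connect f y x by apply: connect1; rewrite Hfs.
    by case: Px => Px; [left | right]; apply: connect_trans Hyx Px.
  - move: Hf; rewrite /f /rdel Hxy /= => /negbFE /E2_mem [] ->;
      by [left; apply: connect0 | right; apply: connect0].
have Hac : connect f a c.
  by case: F2 => // Had; move: Hda'; rewrite CS Had.
set g := gcore e a b c d.
have Hgac : connect g a c.
  have Hcv : forall v, connect f a v -> v = b \/ connect g a v.
    move=> v Hv; apply: (conn_fwd (P := fun v => v = b \/ connect g a v) _ Hv);
      last by right; exact: connect0.
    move=> x y Hxy Px; case Hg: (g x y).
    - case: Px => [Ex | Px]; last by right; apply: connect_trans Px (connect1 Hg).
      right; subst x; have : e b y by move: Hg; rewrite /g /gcore => /andP [/andP []].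
      move/(leaf_uniq Hb (etrans (Hs _ _) Hab)) => ->; exact: connect0.
    - move: Hg Hxy; rewrite /g /gcore /f /rdel => Hg /andP [Hexy Hn].
      move: Hg; rewrite Hexy Hn /= andbT => /negbFE.
      by move=> /E2_mem [] ->; [right; exact: connect0 | left].
  case: (Hcv c Hac) => [E | //].
  by move: Nbc; rewrite E eqxx.
have Hsub : subrel g (swapg e a b c d) by move=> x y; rewrite /swapg /g /gcore => ->.
have Hswac : connect (swapg e a b c d) a c.
  by apply: (connect_sub (e := g)) Hgac => x y Hxy; apply: connect1; apply: Hsub.
have CS' := sym_connect_sym Hs'.
have Hall : forall u, connect (swapg e a b c d) u a.
  move=> u; have : connect e a u := Hc a u.
  move/(conn_fwd (P := fun v => connect (swapg e a b c d) v a)); apply; last exact: connect0.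
  move=> x y Hxy Px; case Hg: (g x y).
  - by apply: connect_trans Px; apply: connect1; rewrite Hs'; apply: Hsub.
  - have : E2 a b x y || E2 c d x y.
      by move: Hg; rewrite /g /gcore Hxy /=; case: (E2 a b x y); case: (E2 c d x y).
    have Hswcb : swapg e a b c d c b by rewrite /swapg /E2 !eqxx /= !orbT.
    have Hswda : swapg e a b c d d a by rewrite /swapg /E2 !eqxx /= !orbT.
    case/orP => /E2_mem [] ->.
    + exact: connect0.
    + by apply: connect_trans (connect1 _) _; [rewrite Hs'; exact: Hswcb | rewrite CS'].
    + by rewrite CS'.
    + exact: connect1.
move=> u v; apply: connect_trans (Hall u) _; by rewrite CS'.
Qed.

Lemma swapg_acyclic n (e : rel 'I_n) a b c d : SW e a b c d ->
  acyclic e -> acyclic (swapg e a b c d).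
Proof.
move=> H Ha; have [Hs' Hi'] := swapg_simple H.
have Nad' := SW_nead H; have Ncb' := SW_necb H.
case: H => [[[Hs Hi] Hab Hcd Hb Hda] [Nab Nac Nad [Nbc Nbd Ncd]]].
pose f := rdel e c d.
have Hda' : ~~ connect f d a := Hda.
have Hfs : symmetric f := rdel_sym c d Hs.
have CS := sym_connect_sym Hfs.
pose g := gcore e a b c d.
have Hge : subrel g e by move=> x y; rewrite /g /gcore => /andP [/andP []].
have Hgf : subrel g f by move=> x y; rewrite /g /gcore /f /rdel => /andP [/andP [-> _] ->].
move=> p H3 Hu; apply/negP => Hc.
case Hgc: (cycle g p).
  by move: (Ha p H3 Hu); rewrite (sub_cycle Hge Hgc).
have [x [y [Hxy Hng Hcon]]] := cycle_bad Hu H3 Hc (negbT Hgc).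
have HE : E2 a d x y || E2 c b x y.
  by move: Hxy Hng; rewrite /swapg /g /gcore; case: (_ && _ && _).
pose sg := swapg e a b c d.
case/orP: HE => HE.
-
  have Hcon' : connect (rdel sg a d) a d.
    have E : rdel sg x y =2 rdel sg a d by move=> u v; rewrite /rdel (E2_eq _ _ HE).
    have Hcon2 : connect (rdel sg x y) y x := Hcon.
    rewrite (eq_connect E) in Hcon2.
    have CS2 := sym_connect_sym (rdel_sym a d Hs').
    by case/orP: HE => /andP [/eqP Ex /eqP Ey]; subst x y; rewrite // CS2.
  have : ~~ connect f d d.
    apply: (conn_fwd (P := fun v => ~~ connect f v d) _ Hcon'); last by rewrite CS.
    move=> u v /andP [Huv Hn] Pu.
    case Hg: (g u v).
    + apply: contra Pu => Hvd; apply: connect_trans Hvd.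
      by apply: connect1; apply: Hgf.
    + have : E2 c b u v.
        move: Huv; rewrite /sg /swapg; rewrite /g /gcore in Hg.
        by rewrite Hg (negbTE Hn).
      move=> /E2_mem [] ->.
      * exact: (acyc_edge (conj Hs Hi) Ha Hcd).
      * have Hf : f a b by rewrite /f /rdel Hab /E2 (negbTE Nac) (negbTE Nad).
        apply: contra Hda' => Hbd; rewrite CS; apply: connect_trans (connect1 Hf) Hbd.
  by rewrite connect0.
-
  have Hcon' : connect (rdel sg c b) c b.
    have E : rdel sg x y =2 rdel sg c b by move=> u v; rewrite /rdel (E2_eq _ _ HE).
    have Hcon2 : connect (rdel sg x y) y x := Hcon.
    rewrite (eq_connect E) in Hcon2.
    have CS2 := sym_connect_sym (rdel_sym c b Hs').
    by case/orP: HE => /andP [/eqP Ex /eqP Ey]; subst x y; rewrite // CS2.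
  have : c = b.
    apply: (conn_isolated _ Hcon') => u.
    rewrite /rdel /sg /swapg negb_and negbK orbC.
    case Hcb: (E2 c b u b) => //=.
    rewrite [E2 a d u b]/E2 (negbTE Nbd) (eq_sym b a) (negbTE Nab) !andbF /= !orbF.
    apply/negP => /andP [/andP [Hub Hn1] _]; move: Hn1.
    have Hbu : e b u by rewrite Hs.
    by rewrite (leaf_uniq Hb (etrans (Hs _ _) Hab) Hbu) /E2 !eqxx.
  by move=> E; move: Nbc; rewrite E eqxx.
Qed.

Definition Ssum n (D : 'I_n -> nat) (r : rel 'I_n) : nat :=
  \sum_(u : 'I_n) \sum_(v : 'I_n) ((u < v) && r u v) * (D u * D v).

Lemma M2_S n (r : rel 'I_n) (D : 'I_n -> nat) :
  (forall v, deg r v = D v) -> M2 r = Ssum D r.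
Proof.
move=> Hd; rewrite /M2 /Ssum; apply: eq_bigr => u _; rewrite big_mkcond.
by apply: eq_bigr => v _; rewrite !Hd; case: ifP => _; rewrite ?mul1n ?mul0n.
Qed.

Lemma E2_cases (T : eqType) (s t u v : T) :
  E2 s t u v -> (u = s /\ v = t) \/ (u = t /\ v = s).
Proof. by rewrite /E2 => /orP [] /andP [/eqP -> /eqP ->]; [left | right]. Qed.

Lemma sum_pair n (X : 'I_n -> 'I_n -> nat) (s t : 'I_n) :
  \sum_(u : 'I_n) \sum_(v : 'I_n) ((u == s) && (v == t)) * X u v = X s t.
Proof.
rewrite (bigD1 s) //= [X in _ + X]big1 ?addn0; last first.
  by move=> u Hu; apply: big1 => v _; rewrite (negbTE Hu).
rewrite (bigD1 t) //= [X in _ + X]big1 ?addn0; last by move=> v Hv; rewrite (negbTE Hv) andbF.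
by rewrite !eqxx mul1n.
Qed.

Lemma S_E2 n (D : 'I_n -> nat) (s t : 'I_n) : s != t ->
  Ssum D (fun u v => E2 s t u v) = D s * D t.
Proof.
move=> Nst; rewrite /Ssum.
case: (ltngtP s t) => Hst.
- rewrite -(sum_pair (fun u v => D u * D v) s t).
  apply: eq_bigr => u _; apply: eq_bigr => v _; congr (_ * _).
  case: (boolP (E2 s t u v)) => H; last first.
    rewrite andbF; case: (eqVneq u s) => [Eu|] //=; case: (eqVneq v t) => [Ev|] //.
    by move: H; rewrite Eu Ev /E2 !eqxx.
  rewrite andbT; case: (E2_cases H) => [[-> ->] | [-> ->]]; first by rewrite Hst !eqxx.
  by rewrite ltnNge ltnW //= eq_sym (negbTE Nst).
- rewrite mulnC -(sum_pair (fun u v => D u * D v) t s).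
  apply: eq_bigr => u _; apply: eq_bigr => v _; congr (_ * _).
  case: (boolP (E2 s t u v)) => H; last first.
    rewrite andbF; case: (eqVneq u t) => [Eu|] //=; case: (eqVneq v s) => [Ev|] //.
    by move: H; rewrite Eu Ev /E2 !eqxx orbT.
  rewrite andbT; case: (E2_cases H) => [[-> ->] | [-> ->]]; last by rewrite Hst !eqxx.
  by rewrite ltnNge ltnW //= (negbTE Nst).
- by move: Nst; rewrite (_ : s = t) ?eqxx //; apply: val_inj.
Qed.

Lemma M2_swap n (e : rel 'I_n) a b c d : SW e a b c d ->
  M2 (swapg e a b c d) + deg e a * deg e b + deg e c * deg e d =
  M2 e + deg e a * deg e d + deg e c * deg e b.
Proof.
move=> H; have Hd := swapg_deg H.
have Nad' := SW_nead H; have Ncb' := SW_necb H.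
case: H => [[[Hs Hi] Hab Hcd Hb Hda] [Nab Nac Nad [Nbc Nbd Ncd]]].
have Ncb : c != b by rewrite eq_sym.
rewrite (M2_S Hd) (M2_S (D := deg e) (fun v => erefl)).
rewrite -(S_E2 (deg e) Nab) -(S_E2 (deg e) Ncd) -(S_E2 (deg e) Nad) -(S_E2 (deg e) Ncb).
rewrite /Ssum -!big_split; apply: eq_bigr => u _; rewrite -!big_split.
apply: eq_bigr => v _ /=; rewrite /swapg; apply: bool_id.
- by apply/implyP => /E2_cases [[-> ->]|[-> ->]] //; rewrite Hs.
- by apply/implyP => /E2_cases [[-> ->]|[-> ->]] //; rewrite Hs.
- by apply/implyP => /E2_cases [[-> ->]|[-> ->]] //; rewrite Hs.
- by apply/implyP => /E2_cases [[-> ->]|[-> ->]] //; rewrite Hs.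
- apply/negP => /andP [] /E2_cases [[-> ->]|[-> ->]];
  by rewrite /E2 ?(negbTE Nac) ?(negbTE Nad) ?(negbTE Nbc) ?(negbTE Nbd) ?andbF.
- apply/negP => /andP [] /E2_cases [[-> ->]|[-> ->]];
  by rewrite /E2 ?(negbTE Nac) ?(negbTE Nab) ?(eq_sym d c) ?(negbTE Ncd) ?(eq_sym d b) ?(negbTE Nbd) ?andbF.
Qed.

Lemma tailok_eq n (r1 r2 : rel 'I_n) : (forall v, deg r1 v = deg r2 v) ->
  forall y z, tailok r1 y z = tailok r2 y z.
Proof. by move=> Hd y z; elim: z y => [|v z IH] y /=; rewrite Hd // IH. Qed.

Lemma dseg_pair n (r : rel 'I_n) x y :
  x != y -> r x y -> deg r x != 2 -> deg r y != 2 -> is_dsegment r [:: x; y].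
Proof. by move=> Nxy Hxy Hx Hy; rewrite /= inE Nxy Hxy Hx Hy. Qed.

Lemma rev_neq (T : eqType) (x : T) l : uniq (x :: l) -> l != [::] -> rev (x :: l) != x :: l.
Proof.
case/lastP: l => [|mid y] // Hu _; rewrite rev_cons rev_rcons.
apply/negP => /eqP [Eyx _]; move: Hu; rewrite /= Eyx mem_rcons inE eqxx.
by [].
Qed.

Lemma size_neq (T : eqType) (s t : seq T) : size s != size t -> s != t.
Proof. by apply: contraNneq => ->. Qed.

Lemma dseg_long n (r : rel 'I_n) x y z : is_dsegment r [:: x, y & z] -> deg r y = 2 -> z != [::].
Proof. by case: z => // H E; move: H; rewrite dseg2 /= E !andbF. Qed.

Lemma uniq4 (T : eqType) (p1 p2 q : seq T) :
  size p1 = 2 -> size p2 = 2 -> size q != 2 -> p1 != p2 -> rev q != q ->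
  uniq [:: p1; p2; q; rev q].
Proof.
move=> S1 S2 Sq N12 Nq; rewrite /= !inE !negb_or N12 andbT /=.
have H1 : forall p, size p = 2 -> p != q by move=> p Sp; apply: size_neq; rewrite Sp eq_sym.
have H2 : forall p, size p = 2 -> p != rev q by move=> p Sp; apply: size_neq; rewrite size_rev Sp eq_sym.
by rewrite (H1 p1 S1) (H1 p2 S2) (H2 p1 S1) (H2 p2 S2) eq_sym Nq.
Qed.

Lemma seg_generic n k (e : rel 'I_n) a b c d u0 m t s1 s2 :
  SW e a b c d -> acyclic e ->
  (forall u v, E2 u0 m u v = E2 c d u v) ->
  (forall u v, E2 s1 s2 u v || E2 t m u v = E2 a d u v || E2 c b u v) ->
  deg e u0 != 2 -> deg e m = 2 -> deg e a != 2 -> deg e t != 2 ->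
  deg e s1 != 2 -> deg e s2 != 2 ->
  u0 != a -> u0 != b -> s1 != s2 ->
  (forall z, path (gcore e a b c d) m z -> t \notin m :: z) ->
  num_segments e k -> num_segments (swapg e a b c d) k.
Proof.
move=> H Ha HUm HN Hu0 Hm Hadeg Htdeg Hs1 Hs2 Nu0a Nu0b N12 Ht [s [Us Hs Ss]].
have Hd := swapg_deg H; have [Hss Hsi] := swapg_simple H.
have Nad' := SW_nead H; have Ncb' := SW_necb H.
case: H => [[[Hsy Hi] Hab Hcd Hb Hda] [Nab Nac Nad [Nbc Nbd Ncd]]].
pose g := gcore e a b c d.
pose sg := swapg e a b c d.
have Hge : subrel g e by move=> x y; rewrite /g /gcore => /andP [/andP []].
have Hgs : subrel g sg by move=> x y; rewrite /sg /swapg /g /gcore => ->.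
have Hgsym : symmetric g := gcore_sym a b c d Hsy.
have Hem : e u0 m.
  have : E2 c d u0 m by rewrite -HUm /E2 !eqxx.
  by case/E2_cases => [[-> ->] | [-> ->]] //; rewrite Hsy.
have [z Hsig] := seg_exists (conj Hsy Hi) Ha Hem Hu0.
have Hz := dseg_long Hsig Hm.
have T1 : forall u v, e u v -> ~~ g u v -> E2 a b u v || E2 u0 m u v.
  move=> u v Huv; rewrite HUm /g /gcore Huv /=.
  by case: (E2 a b u v); case: (E2 c d u v).
have T2 : forall u v, sg u v -> ~~ g u v -> E2 s1 s2 u v || E2 t m u v.
  move=> u v; rewrite HN /sg /swapg /g /gcore.
  by case: (_ && _ && _) => //=.
have NE : forall u v, E2 a d u v || E2 c b u v -> ~~ e u v.
  move=> u v /orP [] /E2_cases [[-> ->] | [-> ->]]; by rewrite // Hsy.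
have NG : forall u v, E2 a d u v || E2 c b u v -> ~~ g u v.
  by move=> u v /NE Hn; rewrite /g /gcore (negbTE Hn).
have Hpg : path g m z.
  have Hpe : path e m z by move: Hsig; rewrite dseg2 => /and5P [].
  apply/negPn/negP => Hng.
  have [q1 [u [v [q2 [Eq Huv Hnuv]]]]] := path_split Hpe Hng.
  have Eσ : [:: u0, m & z] = (u0 :: q1) ++ u :: v :: q2 by rewrite Eq.
  case/orP: (T1 _ _ Huv Hnuv) => HE.
  - have Hab2 : is_dsegment e [:: a; b] by apply: dseg_pair; rewrite // Hb.
    case: (Ustep (z := [::]) Hsy Hsig Eσ HE Hadeg Hab2) => [[E1 _] | E1].
      by move: Nu0a; rewrite E1 eqxx.
    by move: E1 => /= [E1 _]; move: Nu0b; rewrite E1 eqxx.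
  - have Hu0n : u0 \notin m :: z by move: Hsig; rewrite dseg2 => /and5P [/andP []].
    move: Hu0n; rewrite Eq.
    by case/E2_cases: HE => [[-> ->] | [-> ->]]; rewrite mem_cat !inE eqxx ?orbT.
have Hsnu : is_dsegment sg [:: t, m & z].
  have Htm : sg t m by rewrite /sg /swapg -orbA -HN /E2 !eqxx !orbT.
  move: Hsig; rewrite !dseg2 => /and5P [/andP [_ Hu] _ Hp _ Htl].
  rewrite /= in Hu; rewrite /= Ht // Hu Htm (sub_path Hgs Hpg) /sg Hd Htdeg (tailok_eq Hd) /=.
  by [].  
have Hs12 : sg s1 s2 by rewrite /sg /swapg -orbA -HN /E2 !eqxx /= ?orbT.
have Ng12 : ~~ g s1 s2 by apply: NG; rewrite -HN /E2 !eqxx.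
have Ngtm : ~~ g t m by apply: NG; rewrite -HN /E2 !eqxx !orbT.
have Ngu0m : ~~ g u0 m by rewrite /g /gcore -HUm /E2 !eqxx /= andbF.
apply: (seg_swap (R := e) (g := g) Us Hs Ss (fun v => esym (Hd v)) Hge Hgs
       (L := [:: [:: a; b]; [:: b; a]; [:: u0, m & z]; rev [:: u0, m & z]])
       (L' := [:: [:: s1; s2]; [:: s2; s1]; [:: t, m & z]; rev [:: t, m & z]])).
- apply: uniq4 => //; first by rewrite /= !eqSS size_eq0.
  + by apply/eqP => [[E]]; move: Nab; rewrite E eqxx.
  + apply: rev_neq; last by [].
    by move: Hsig; rewrite dseg2 => /and5P [].
- by [].
- have Hab2 : is_dsegment e [:: a; b] by apply: dseg_pair; rewrite // Hb.
  move=> q; rewrite !inE => /or4P [] /eqP ->.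
  + by split => //=; rewrite /g /gcore /E2 !eqxx /= andbF.
  + split; first by apply: (dseg_rev Hsy Hab2).
    by rewrite /= /g /gcore /E2 !eqxx /= orbT andbF.
  + by split => //=; rewrite negb_and Ngu0m.
  + split; first by apply: dseg_rev.
    by rewrite gpath_rev //= negb_and Ngu0m.
- have Hab2 : is_dsegment e [:: a; b] by apply: dseg_pair; rewrite // Hb.
  exact: (touched_char Hsy T1 Hab2 Hadeg Hsig Hu0).
- apply: uniq4 => //; first by rewrite /= !eqSS size_eq0.
  + by apply/eqP => [[E]]; move: N12; rewrite E eqxx.
  + apply: rev_neq; last by [].
    by move: Hsnu; rewrite dseg2 => /and5P [].
- by [].
- have Hp12 : is_dsegment sg [:: s1; s2] by apply: dseg_pair; rewrite // Hd.
  move=> q; rewrite !inE => /or4P [] /eqP ->.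
  + by split => //=; rewrite andbT.
  + split; first by apply: (dseg_rev Hss Hp12).
    by rewrite /= Hgsym andbT.
  + by split => //=; rewrite negb_and Ngtm.
  + split; first by apply: (dseg_rev Hss).
    by rewrite gpath_rev //= negb_and Ngtm.
- have Hp12 : is_dsegment sg [:: s1; s2] by apply: dseg_pair; rewrite // Hd.
  have Ht2 : deg sg t != 2 by rewrite Hd.
  have Hs12' : deg sg s1 != 2 by rewrite Hd.
  exact: (touched_char Hss T2 Hp12 Hs12' Hsnu Ht2).
Qed.

Lemma swap_better n k (e : rel 'I_n) a b c d :
  CT e k -> e a b -> e c d -> deg e a = 4 -> deg e b = 1 ->
  (deg e c = 3 /\ deg e d = 2) \/ (deg e c = 2 /\ deg e d = 3) ->
  ~~ connect (rdel e c d) d a ->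
  CT (swapg e a b c d) k /\ M2 e < M2 (swapg e a b c d).
Proof.
move=> [[Hsim [Hcon Hacy]] Hchem Hseg] Hab Hcd Ha Hb Hcd23 Hda.
have N : forall x y, deg e x != deg e y -> x != y by move=> x y; apply: contraNneq => ->.
have Nab : a != b by apply: N; rewrite Ha Hb.
have [Nac Nad Nbc Nbd Ncd] : [/\ a != c, a != d, b != c, b != d & c != d].
  by case: Hcd23 => [[Hc Hd] | [Hc Hd]]; split; apply: N; rewrite ?Ha ?Hb ?Hc ?Hd.
have H : SW e a b c d by split; split.
have Hdeg := swapg_deg H.
split; last first.
  have := M2_swap H; rewrite Ha Hb.
  by case: Hcd23 => [[-> ->] | [-> ->]]; lia.
split.
- split; first exact: swapg_simple.
  split; first exact: swapg_connected.
  exact: swapg_acyclic.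
- by move=> v; rewrite Hdeg.
- case: Hcd23 => [[Hc Hd] | [Hc Hd]].
  + apply: (seg_generic (u0 := c) (m := d) (t := a) (s1 := c) (s2 := b) H Hacy) => //.
    * by move=> u v; rewrite orbC.
    * by rewrite Hc.
    * by rewrite Ha.
    * by rewrite Ha.
    * by rewrite Hc.
    * by rewrite Hb.
    * by rewrite eq_sym.
    * by rewrite eq_sym.
    * by rewrite eq_sym.
    * move=> z Hp; apply: contra Hda => Hin.
      have := path_connect Hp Hin.
      apply: connect_sub => u v Huv; apply: connect1.
      by move: Huv; rewrite /gcore /rdel => /andP [/andP [-> _] ->].
  + apply: (seg_generic (u0 := d) (m := c) (t := b) (s1 := a) (s2 := d) H Hacy) => //.
    * by move=> u v; rewrite E2C.
    * by move=> u v; rewrite (E2C b c).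
    * by rewrite Hd.
    * by rewrite Ha.
    * by rewrite Hb.
    * by rewrite Ha.
    * by rewrite Hd.
    * by rewrite eq_sym.
    * by rewrite eq_sym.
    * move=> z Hp; apply/negP => Hin.
      have Hcb := path_connect Hp Hin.
      have : c = b.
        apply: (conn_isolated _ Hcb) => u; rewrite /gcore.
        apply/negP => /andP [/andP [Hub Hn] _]; move: Hn.
        have Hbu : e b u by rewrite (proj1 Hsim).
        by rewrite (leaf_uniq Hb (etrans (proj1 Hsim _ _) Hab) Hbu) /E2 !eqxx.
      by move=> E; move: Nbc; rewrite E eqxx.
Qed.

Theorem lemma5 (n k : nat) (e : rel 'I_n) :
  3 <= k <= n - 1 ->
  CT e k ->
  (forall e' : rel 'I_n, CT e' k -> M2 e' <= M2 e) ->
  (exists u v : 'I_n, [/\ e u v, deg e u = 1 & deg e v = 4]) ->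
  ~ (exists u v : 'I_n, [/\ e u v, deg e u = 3 & deg e v = 2]).
Proof.
move=> _ HCT Hmax [p [w [Hpw Hp1 Hw4]]] [x [y [Hxy Hx3 Hy2]]].
have HCT' := HCT; case: HCT' => [[Hsim [_ Hacy]] _ _].
have Hwp : e w p by rewrite (proj1 Hsim).
case: (boolP (connect (rdel e x y) y w)) => Hc.
- have Hnc : ~~ connect (rdel e y x) x w.
    have E : rdel e y x =2 rdel e x y by move=> u v; rewrite /rdel E2C.
    rewrite (eq_connect E); apply/negP => Hxw.
    have CS := sym_connect_sym (rdel_sym x y (proj1 Hsim)).
    have Hxy' : connect (rdel e x y) x y by apply: connect_trans Hxw _; rewrite CS.
    by move: (acyc_edge Hsim Hacy Hxy); rewrite Hxy'.
  have Hyx : e y x by rewrite (proj1 Hsim).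
  have [H1 H2] := swap_better HCT Hwp Hyx Hw4 Hp1 (or_intror (conj Hy2 Hx3)) Hnc.
  by move: (Hmax _ H1); rewrite leqNgt H2.
- have [H1 H2] := swap_better HCT Hwp Hxy Hw4 Hp1 (or_introl (conj Hx3 Hy2)) Hc.
  by move: (Hmax _ H1); rewrite leqNgt H2.
Qed.
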